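(* Let $A\in\mathbb{R}^{n\times n}$, $B\in\mathbb{R}^{n\times k}$, $C\in\mathbb{R}^{m\times n}$, and let $\mathcal{V}^*(C)$ be the maximal $(A,B)$-invariant subspace contained in $\operatorname{Ker}C$. Suppose one of the following holds: (1) $n-m\ge k$, $\operatorname{Im}B\subseteq\operatorname{Ker}C$, and $CAv\neq0$ for every nonzero $v\in\operatorname{Ker}C$; (2) $n-m<k$, $\operatorname{Ker}C\subseteq\operatorname{Im}B$, and there is a matrix $Z$ with $ZB=0$ such that $ZAv\neq0$ for every nonzero $v\in\operatorname{Ker}C$. Then $\dim\mathcal{V}^*(C)=0$, and, in the asynchronous dynamic game described in the context, if the attacker's choice in an odd epoch $l$ is $C_l=C$, the game is in lock mode from epoch $l$ on (there is $\gamma$ with $\Phi_i=\gamma$ for all $i\ge l$).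
   Context: A subspace $\mathcal{V}$ is $(A,B)$-invariant if $(A+BF)\mathcal{V}\subseteq\mathcal{V}$ for some $F\in\mathbb{R}^{k\times n}$ (a friend of $\mathcal{V}$). For $C\in\mathbb{R}^{m\times n}$, $F\in\mathbb{R}^{k\times n}$ let $\Omega(C,F)=[C;\,C(A+BF);\,\dots;\,C(A+BF)^{n-1}]$. Best responses: $BR1_a(F)=\arg\min_{C}\dim\operatorname{Ker}\Omega(C,F)$; $BR1_d(C)=\arg\max_{F}\dim\operatorname{Ker}\Omega(C,F)$; $BR2_a(F)=\arg\min_{C\in BR1_a(F)}\dim\mathcal{V}^*(C)$; $BR2_d(C)=\arg\max_{F\in BR1_d(C)}\min_{C'}\dim\operatorname{Ker}\Omega(C',F)$. The game: an initial $F_0$ is given; in each odd epoch $i$ the attacker chooses $C_i\in BR2_a(F_{i-1})$ (keeping $C_i=C_{i-2}$ whenever $C_{i-2}\in BR2_a(F_{i-1})$), $F_i=F_{i-1}$, and $\Phi_i=\min_{C}\dim\operatorname{Ker}\Omega(C,F_{i-1})$; in each even epoch $i$ the defender chooses $F_i\in BR2_d(C_{i-1})$ (keeping $F_i=F_{i-2}$ whenever $F_{i-2}\in BR2_d(C_{i-1})$), $C_i=C_{i-1}$, and $\Phi_i=\max_{F}\dim\operatorname{Ker}\Omega(C_{i-1},F)$. *)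

(* Defs.v *)
From HB Require Import structures.
From mathcomp Require Import all_boot all_order all_algebra.
Set Implicit Arguments. Unset Strict Implicit. Unset Printing Implicit Defensive.
Import Order.TTheory GRing.Theory Num.Theory.
Local Open Scope ring_scope.

(* Conventions: vectors of R^n are column vectors 'cV_n.  A subspace of R^n
   is represented by a square matrix V : 'M_n whose ROW space is the set of
   transposes v^T of its vectors (mxalgebra convention); its dimension is
   \rank V.  Ker C = {v | C v = 0} is represented by kermx C^T. *)

Section Defs.
Variable R : realFieldType.
Variables n m k : nat.
Variables (A : 'M[R]_n) (B : 'M[R]_(n, k)).

Definition Omega (C : 'M[R]_(m, n)) (F : 'M[R]_(k, n)) :
  'M[R]_(\sum_(i < n) m, n) :=
  @mxcol R n (fun _ => m) n (fun i => C *m (A + B *m F) ^+ i).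

Definition dimKerOmega (C : 'M[R]_(m, n)) (F : 'M[R]_(k, n)) : nat :=
  \rank (kermx (Omega C F)^T).

Definition KerS (C : 'M[R]_(m, n)) : 'M[R]_n := kermx C^T.

Definition ABinvariant (V : 'M[R]_n) : Prop :=
  exists F : 'M[R]_(k, n), (V *m (A + B *m F)^T <= V)%MS.

Definition is_Vstar (C : 'M[R]_(m, n)) (V : 'M[R]_n) : Prop :=
  [/\ ABinvariant V, (V <= KerS C)%MS &
      forall W : 'M[R]_n, ABinvariant W -> (W <= KerS C)%MS -> (W <= V)%MS].

Definition dim_Vstar (C : 'M[R]_(m, n)) (d : nat) : Prop :=
  exists V : 'M[R]_n, is_Vstar C V /\ \rank V = d.

Definition is_minKer (F : 'M[R]_(k, n)) (d : nat) : Prop :=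
  (exists C : 'M[R]_(m, n), dimKerOmega C F = d) /\
  forall C : 'M[R]_(m, n), (d <= dimKerOmega C F)%N.

Definition is_maxKer (C : 'M[R]_(m, n)) (d : nat) : Prop :=
  (exists F : 'M[R]_(k, n), dimKerOmega C F = d) /\
  forall F : 'M[R]_(k, n), (dimKerOmega C F <= d)%N.

Definition BR1_a (F : 'M[R]_(k, n)) (C : 'M[R]_(m, n)) : Prop :=
  forall C' : 'M[R]_(m, n), (dimKerOmega C F <= dimKerOmega C' F)%N.

Definition BR1_d (C : 'M[R]_(m, n)) (F : 'M[R]_(k, n)) : Prop :=
  forall F' : 'M[R]_(k, n), (dimKerOmega C F' <= dimKerOmega C F)%N.

Definition BR2_a (F : 'M[R]_(k, n)) (C : 'M[R]_(m, n)) : Prop :=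
  BR1_a F C /\
  exists d, dim_Vstar C d /\
    forall (C' : 'M[R]_(m, n)) d', BR1_a F C' -> dim_Vstar C' d' -> (d <= d')%N.

Definition BR2_d (C : 'M[R]_(m, n)) (F : 'M[R]_(k, n)) : Prop :=
  BR1_d C F /\
  exists d, is_minKer F d /\
    forall (F' : 'M[R]_(k, n)) d', BR1_d C F' -> is_minKer F' d' -> (d' <= d)%N.

(* The asynchronous dynamic game started from F0; epochs i >= 1.
   Cs i, Fs i, Phi i are the attacker's matrix, the defender's gain and the
   value at epoch i (Cs 0 is irrelevant). *)
Definition game (F0 : 'M[R]_(k, n)) (Cs : nat -> 'M[R]_(m, n))
    (Fs : nat -> 'M[R]_(k, n)) (Phi : nat -> nat) : Prop :=
  Fs 0%N = F0 /\
  forall i : nat, (0 < i)%N ->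
    (odd i ->
       [/\ BR2_a (Fs i.-1) (Cs i),
           ((2 < i)%N -> BR2_a (Fs i.-1) (Cs (i - 2)%N) -> Cs i = Cs (i - 2)%N),
           Fs i = Fs i.-1 &
           is_minKer (Fs i.-1) (Phi i)]) /\
    (~~ odd i ->
       [/\ BR2_d (Cs i.-1) (Fs i),
           (BR2_d (Cs i.-1) (Fs (i - 2)%N) -> Fs i = Fs (i - 2)%N),
           Cs i = Cs i.-1 &
           is_maxKer (Cs i.-1) (Phi i)]).

End Defs.

(* Main.v *)
Require Import Defs.
From HB Require Import structures.
From mathcomp Require Import all_boot all_order all_algebra.
From mathcomp Require Import zify.
Import Order.TTheory GRing.Theory Num.Theory.
Local Open Scope ring_scope.
Set Implicit Arguments. Unset Strict Implicit.

Definition hyp (R : realFieldType) (n m k : nat)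
    (A : 'M[R]_n) (B : 'M[R]_(n, k)) (C : 'M[R]_(m, n)) : Prop :=
  ( [/\ (m + k <= n)%N,
        (forall u : 'cV[R]_k, C *m (B *m u) = 0) &
        (forall v : 'cV[R]_n, v != 0 -> C *m v = 0 -> C *m A *m v != 0)]
  \/
    [/\ (n < m + k)%N,
        (forall v : 'cV[R]_n, C *m v = 0 -> exists u : 'cV[R]_k, v = B *m u) &
        (exists (p : nat) (Z : 'M[R]_(p, n)), Z *m B = 0 /\
           (forall v : 'cV[R]_n, v != 0 -> C *m v = 0 -> Z *m A *m v != 0))]).

Lemma core (R : realFieldType) (n m k : nat)
    (A : 'M[R]_n) (B : 'M[R]_(n, k)) (C : 'M[R]_(m, n)) :
  hyp A B C -> forall (F : 'M[R]_(k, n)) (v : 'cV[R]_n),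
  C *m v = 0 -> C *m ((A + B *m F) *m v) = 0 -> v = 0.
Proof.
move=> [[_ hCB hA]|[_ hK [p [Z [hZB hZ]]]]] F v hv hMv.
- apply/eqP; apply: contraT => nz; have := hA v nz hv.
  move: hMv; rewrite mulmxDl mulmxDr -(mulmxA B) hCB addr0 mulmxA => ->.
  by rewrite eqxx.
- apply/eqP; apply: contraT => nz; have := hZ v nz hv.
  have [u hu] := hK _ hMv.
  have : Z *m ((A + B *m F) *m v) = 0 by rewrite hu mulmxA hZB mul0mx.
  rewrite mulmxDl mulmxDr -!mulmxA (mulmxA Z B) hZB mul0mx addr0 mulmxA => ->.
  by rewrite eqxx.
Qed.

Lemma core_row (R : realFieldType) (n m k : nat)
    (A : 'M[R]_n) (B : 'M[R]_(n, k)) (C : 'M[R]_(m, n)) :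
  hyp A B C -> forall (F : 'M[R]_(k, n)) (w : 'rV[R]_n),
  w *m C^T = 0 -> w *m (C *m (A + B *m F))^T = 0 -> w = 0.
Proof.
move=> h F w h1 h2.
have := core h (v := w^T) (F := F).
rewrite -(trmxK C) -trmx_mul h1 trmx0 => /(_ erefl).
rewrite trmxK mulmxA -(trmxK (C *m _)) -trmx_mul h2 trmx0 => /(_ erefl).
by move=> e; rewrite -(trmxK w) e trmx0.
Qed.

Lemma Wzero (R : realFieldType) (n m k : nat)
    (A : 'M[R]_n) (B : 'M[R]_(n, k)) (C : 'M[R]_(m, n)) :
  hyp A B C -> forall (F : 'M[R]_(k, n)) (W : 'M[R]_n),
  (W *m (A + B *m F)^T <= W)%MS -> (W <= kermx C^T)%MS -> W = 0.
Proof.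
move=> h F W hinv hker; apply/row_matrixP => i; rewrite row0.
apply: (core_row h (F := F)).
  by apply/sub_kermxP; apply: submx_trans hker; apply: row_sub.
rewrite trmx_mul mulmxA; apply/sub_kermxP; apply: submx_trans hker.
apply: submx_trans hinv; apply: submxMr; apply: row_sub.
Qed.

Lemma dimKer0 (R : realFieldType) (n m k : nat)
    (A : 'M[R]_n) (B : 'M[R]_(n, k)) (C : 'M[R]_(m, n)) :
  hyp A B C -> forall F : 'M[R]_(k, n), dimKerOmega A B C F = 0%N.
Proof.
move=> h F; apply/eqP; rewrite /dimKerOmega mxrank_eq0; apply/eqP.
set K := kermx _.
have hK : forall i : 'I_n, K *m (C *m (A + B *m F) ^+ i)^T = 0.
  move=> i; have := mulmx_ker (Omega A B C F)^T.
  rewrite -/K /Omega tr_mxcol mul_mxrow => /(congr1 (fun X => submxrow X i)).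
  by rewrite mxrowK submxrow0.
apply/row_matrixP => j; rewrite row0.
case: n A B C h F K hK j => [|[|n]] A B C h F K hK j.
- by apply/rowP => [[]].
- apply: (core_row h (F := F)).
    by have := hK ord0; rewrite expr0 mulmx1 => e; rewrite -row_mul e row0.
  have e0 := hK ord0; rewrite expr0 mulmx1 in e0.
  have -> : A + B *m F = ((A + B *m F) 0 0)%:M.
    by apply/matrixP => a b; rewrite !mxE !ord1 eqxx mulr1n.
  by rewrite mul_mx_scalar linearZ /= -scalemxAr -row_mul e0 row0 scaler0.
- apply: (core_row h (F := F)).
    by have := hK ord0; rewrite expr0 mulmx1 => e; rewrite -row_mul e row0.
  by have := hK (Ordinal (isT : (1 < n.+2)%N)); rewrite /= expr1 => e;
     rewrite -row_mul e row0.
Qed.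

Unset Implicit Arguments.

Theorem theorem2 (R : realFieldType) (n m k : nat)
    (A : 'M[R]_n) (B : 'M[R]_(n, k)) (C : 'M[R]_(m, n)) :
  ( (* case (1) *)
    [/\ (m + k <= n)%N,
        (forall u : 'cV[R]_k, C *m (B *m u) = 0) &
        (forall v : 'cV[R]_n, v != 0 -> C *m v = 0 -> C *m A *m v != 0)]
  \/
    (* case (2) *)
    [/\ (n < m + k)%N,
        (forall v : 'cV[R]_n, C *m v = 0 -> exists u : 'cV[R]_k, v = B *m u) &
        (exists (p : nat) (Z : 'M[R]_(p, n)), Z *m B = 0 /\
           (forall v : 'cV[R]_n, v != 0 -> C *m v = 0 -> Z *m A *m v != 0))]) ->
  dim_Vstar A B C 0 /\
  (forall (F0 : 'M[R]_(k, n)) (Cs : nat -> 'M[R]_(m, n))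
          (Fs : nat -> 'M[R]_(k, n)) (Phi : nat -> nat) (l : nat),
     game A B F0 Cs Fs Phi -> odd l -> Cs l = C ->
     exists gamma : nat, forall i : nat, (l <= i)%N -> Phi i = gamma).
Proof.
move=> h0; have h : hyp A B C := h0.
have VS : dim_Vstar A B C 0.
  exists 0; split; last by rewrite mxrank0.
  split.
  - by exists 0; rewrite mul0mx sub0mx.
  - by rewrite sub0mx.
  - by move=> W [F hF] hW; rewrite (Wzero h hF hW) sub0mx.
split=> // F0 Cs Fs Phi l [_ hg] ol hCl.
have BR2C : forall F, BR2_a A B F C.
  move=> F; split; first by move=> C'; rewrite (dimKer0 h).
  by exists 0%N; split.
have hC : forall i, (l <= i)%N -> Cs i = C.
  elim/ltn_ind => i IH li.
  case: (eqVneq i l) => [-> //| nil].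
  have lti : (l < i)%N by rewrite ltn_neqAle eq_sym nil li.
  have i0 : (0 < i)%N by apply: leq_ltn_trans lti.
  have [hodd heven] := hg i i0.
  case oi: (odd i).
  - have [_ keep _ _] := hodd oi.
    have ne : i != l.+1 by apply/eqP => e; move: oi; rewrite e /= ol.
    have i2 : (2 < i)%N by case: l ol lti ne {hCl li nil IH} => [|[|l]] //; lia.
    have e2 : Cs (i - 2)%N = C by apply: IH; lia.
    by rewrite keep // e2; apply: BR2C.
  - have [_ _ -> _] := heven (negbT oi).
    by apply: IH; lia.
exists 0%N => i li.
have l0 : (0 < l)%N by case: (l) ol.
have i0 : (0 < i)%N by lia.
have [hodd heven] := hg i i0.
case oi: (odd i).
- have [_ _ _ [_ hm]] := hodd oi.
  by apply/eqP; rewrite -leqn0 -(dimKer0 h (Fs i.-1)); apply: hm.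
- have [_ _ _ [[F hF] _]] := heven (negbT oi).
  have lti : (l < i)%N by rewrite ltn_neqAle li andbT; apply/eqP => e; rewrite e oi in ol.
  rewrite hC in hF; last by lia.
  by rewrite -hF (dimKer0 h).
Qed.
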